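(* Let $d\ge2$, $\gamma\ge2d$, $v\in\mathcal R_\infty^{(\gamma)}$, and let $h\in\ell^\infty(\mathbb Z^d,\mathbb Z)$ satisfy $M_h:=\max_{\mathbf m}h_{\mathbf m}>0$ and $v+f^{(d,\gamma)}\cdot h\in\mathcal R^{(\gamma)}_\infty$. Then every connected component of $\mathcal S_{\max}(h)=\{\mathbf n\in\mathbb Z^d:h_{\mathbf n}=M_h\}$ is infinite.
   Context: $f^{(d,\gamma)}=\gamma-\sum_{i=1}^d(u_i+u_i^{-1})$, acting on $h\in\ell^\infty(\mathbb Z^d,\mathbb Z)$ by $(f^{(d,\gamma)}\cdot h)_{\mathbf n}=\gamma h_{\mathbf n}-\sum_i(h_{\mathbf n+\mathbf e^{(i)}}+h_{\mathbf n-\mathbf e^{(i)}})$. For nonempty $F\subset\mathbb Z^d$, $\mathsf N_F(\mathbf n)=|F\cap\{\mathbf n\pm\mathbf e^{(i)}\}|$. $\mathcal R^{(\gamma)}_\infty=\{v\in\{0,\dots,\gamma-1\}^{\mathbb Z^d}:$ for every finite nonempty $F\subset\mathbb Z^d$ there is $\mathbf n\in F$ with $v_{\mathbf n}\ge\mathsf N_F(\mathbf n)\}$. A set $S\subset\mathbb Z^d$ is connected if any two points of $S$ are joined by a path $p(0),\dots,p(k)$ in $S$ with $\|p(j)-p(j-1)\|_{\max}=1$. *)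

(* Defs.v *)
From HB Require Import structures.
From mathcomp Require Import all_boot all_order all_algebra.
Set Implicit Arguments. Unset Strict Implicit. Unset Printing Implicit Defensive.
Import Order.TTheory GRing.Theory Num.Theory.
Local Open Scope ring_scope.

Definition pt (d : nat) := {ffun 'I_d -> int}.

Definition shiftp d (n : pt d) (i : 'I_d) : pt d := [ffun j => n j + (j == i)%:Z].
Definition shiftm d (n : pt d) (i : 'I_d) : pt d := [ffun j => n j - (j == i)%:Z].

Definition bounded d (h : pt d -> int) : Prop := exists B : int, forall n, `|h n| <= B.

Definition fact_h d (gamma : nat) (h : pt d -> int) (n : pt d) : int :=
  gamma%:Z * h n - \sum_(i < d) (h (shiftp n i) + h (shiftm n i)).

Definition NF d (F : seq (pt d)) (n : pt d) : nat :=
  (\sum_(i < d) ((shiftp n i \in F) + (shiftm n i \in F)))%N.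

Definition R_inf d (gamma : nat) (v : pt d -> int) : Prop :=
  (forall n, 0 <= v n <= gamma%:Z - 1) /\
  (forall F : seq (pt d), F != [::] ->
     exists2 n, n \in F & (NF F n)%:Z <= v n).

Definition adj d (x y : pt d) : bool :=
  (x != y) && [forall i, `|x i - y i| <= 1].

Definition conn_in d (S : pt d -> bool) (x y : pt d) : Prop :=
  exists p : seq (pt d), [/\ path (@adj d) x p, last x p = y & all S (x :: p)].

Definition infinite_set d (A : pt d -> Prop) : Prop :=
  forall s : seq (pt d), exists2 y, A y & y \notin s.

(* Main.v *)
Require Import Defs.
From HB Require Import structures.
From mathcomp Require Import all_boot all_order all_algebra.
From Stdlib Require Import Classical.
Import Order.TTheory GRing.Theory Num.Theory.
Set Implicit Arguments. Unset Strict Implicit.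
Local Open Scope ring_scope.

Lemma L1 (M p q : int) : M - 1 + p + (M - 1 + q) = (M - 1) * 2 + (p + q).
Proof. by rewrite mulr_natr mulr2n addrACA. Qed.

Lemma fin (vm X g N : int) : vm + (X + g) <= g - 1 + (X + N) -> vm < N.
Proof.
by rewrite addrCA [g - 1 + _]addrC -addrA lerD2l addrA lerBrDr addrAC lerD2r lezD1.
Qed.

Lemma filt_ex d (P : pt d -> Prop) (s : seq (pt d)) :
  exists F : seq (pt d), forall y, y \in F <-> (y \in s /\ P y).
Proof.
elim: s => [|a s [F HF]]; first by exists [::]; move=> y; split => // [[]].
case: (classic (P a)) => Pa.
- exists (a :: F) => y; rewrite !in_cons; split.
  + case/orP => [/eqP->|/HF [H1 H2]]; first by rewrite eqxx.
    by rewrite H1 orbT.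
  + case => /orP [/eqP->|H1] H2; first by rewrite eqxx.
    by apply/orP; right; apply/HF.
- exists F => y; rewrite !in_cons; split.
  + by move/HF => [H1 H2]; rewrite H1 orbT.
  + case => /orP [/eqP->|H1] H2; first by [].
    by apply/HF.
Qed.

Lemma adj_shiftp d (m : pt d) i : adj m (shiftp m i).
Proof.
apply/andP; split.
- apply/eqP => /(congr1 (fun f : pt d => f i)); rewrite ffunE eqxx.
  by move/(congr1 (fun z => z - m i)); rewrite subrr addrC addKr.
- apply/forallP => j; rewrite ffunE opprD addrA subrr add0r normrN.
  by case: (j == i).
Qed.

Lemma adj_shiftm d (m : pt d) i : adj m (shiftm m i).
Proof.
apply/andP; split.
- apply/eqP => /(congr1 (fun f : pt d => f i)); rewrite ffunE eqxx.
  by move/(congr1 (fun z => z - m i)); rewrite subrr addrC addKr.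
- apply/forallP => j; rewrite ffunE opprB addrC subrK.
  by case: (j == i).
Qed.

Lemma conn_last d (S : pt d -> bool) x y : conn_in S x y -> S y.
Proof.
case=> p [_ <- Hall]; exact: (allP Hall _ (mem_last x p)).
Qed.

Lemma conn_ext d (S : pt d -> bool) x y z :
  conn_in S x y -> adj y z -> S z -> conn_in S x z.
Proof.
case=> p [Hp Hl Hall] Ha Sz; exists (rcons p z); split.
- by rewrite rcons_path Hp Hl.
- by rewrite last_rcons.
- by rewrite -rcons_cons all_rcons Sz.
Qed.

Unset Implicit Arguments.
Theorem corollary4p2 (d gamma : nat) (v h : pt d -> int) (M : int) :
  (2 <= d)%N -> (2 * d <= gamma)%N ->
  R_inf gamma v ->
  bounded h ->
  (forall m, h m <= M) -> (exists m, h m = M) -> 0 < M ->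
  R_inf gamma (fun n => v n + fact_h gamma h n) ->
  forall n, h n = M -> infinite_set (conn_in (fun m => h m == M) n).
Proof.
move=> _ Hg [_ Hv] _ HM _ M0 [Hw _] n hn s.
apply: NNPP => Hne.
have Hin : forall y, conn_in (fun m => h m == M) n y -> y \in s.
  move=> y Hy; apply: NNPP => Hy'; apply: Hne; by exists y; [|apply/negP].
have [F HF] := filt_ex (conn_in (fun m => h m == M) n) s.
have HF' : forall y, y \in F <-> conn_in (fun m => h m == M) n y.
  by move=> y; split; [case/HF|move=> H; apply/HF; split => //; apply: Hin].
have nF : n \in F by apply/HF'; exists [::]; split => //=; rewrite hn eqxx.
have F0 : F != [::] by apply/eqP => F0; rewrite F0 in nF.
have [m mF Hvm] := Hv F F0.
have Hc := (HF' m).1 mF.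
have Hb : forall x, adj m x -> h x <= M - 1 + (x \in F)%:Z.
  move=> x Hx; case xF: (x \in F).
  - by move/HF'/conn_last/eqP: xF => ->; rewrite subrK.
  - rewrite addr0 -ltzD1 subrK lt_neqAle HM andbT; apply/negP => /eqP hx.
    have : x \in F by apply/HF'; apply: (conn_ext Hc Hx); rewrite hx.
    by rewrite xF.
have Hsum : \sum_(i < d) (h (shiftp m i) + h (shiftm m i)) <=
            \sum_(i < d) ((M - 1) * 2 + ((shiftp m i \in F)%:Z + (shiftm m i \in F)%:Z)).
  apply: ler_sum => i _.
  have := lerD (Hb _ (adj_shiftp m i)) (Hb _ (adj_shiftm m i)).
  move=> H; apply: (le_trans H); rewrite le_eqVlt; apply/orP; left; apply/eqP; exact: L1.
have HN : ((NF F m)%:Z : int) = \sum_(i < d) ((shiftp m i \in F)%:Z + (shiftm m i \in F)%:Z).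
  rewrite /NF (big_morph Posz PoszD (erefl (Posz 0))).
  by apply: eq_bigr => i _; rewrite PoszD.
rewrite [X in _ <= X]big_split /= -HN big_const_ord iter_addr addr0 in Hsum.
have := Hw m; rewrite /fact_h => /andP [_ Hwm].
move: Hvm; apply/negP; rewrite -ltNge.
set S := \sum_(i < d) _ in Hsum Hwm.
set N := (NF F m)%:Z in Hsum *.
have hm : h m = M by apply/eqP; exact: (conn_last Hc).
rewrite hm in Hwm.
have HM1 : (0 : int) <= M - 1 by rewrite subr_ge0.
have e1 : gamma%:Z * M = (M - 1) * gamma%:Z + gamma%:Z.
  by rewrite mulrC -{1}(subrK 1 M) mulrDl mul1r.
have e2 : (M - 1) * 2 *+ d <= (M - 1) * gamma%:Z.
  rewrite -mulrnAr; apply: ler_wpM2l => //.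
  by rewrite -mulr_natr -natrM natz lez_nat.
apply: (@fin _ ((M - 1) * gamma%:Z) gamma%:Z).
rewrite -e1.
have -> : v m + gamma%:Z * M = v m + (gamma%:Z * M - S) + S by rewrite -addrA subrK.
apply: (le_trans (lerD Hwm Hsum)).
by rewrite lerD2l lerD2r.
Qed.
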